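(* For all positive integers $m,n$, $\theta(K_{m,n}\times K_2)=\theta(K_{m,n})$.
   Context: The thickness $\theta(G)$ of a graph $G$ is the minimum number of planar subgraphs whose union is $G$. The Kronecker product $G\times H$ of graphs $G$ and $H$ is the graph with vertex set $V(G)\times V(H)$ in which $(g,h)$ and $(g',h')$ are adjacent if and only if $gg'\in E(G)$ and $hh'\in E(H)$. $K_{a,b}$ denotes the complete bipartite graph with parts of sizes $a$ and $b$. *)

(* Defs.v *)
From Stdlib Require Export Reals.
Open Scope R_scope.

(* A drawing of the graph in R^2: distinct points for vertices, and for every
   edge a continuous injective arc [0,1] -> R^2 joining its endpoints, whose
   interior avoids all vertex points; arcs of distinct edges meet only in
   vertex points. *)
Definition planar (V : Type) (adj : V -> V -> Prop) : Prop :=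
  exists (p : V -> R * R) (a : V -> V -> R -> R * R),
    (forall u v, p u = p v -> u = v) /\
    (forall u v, adj u v ->
       continuity (fun t => fst (a u v t)) /\
       continuity (fun t => snd (a u v t)) /\
       a u v 0 = p u /\ a u v 1 = p v /\
       (forall s t, 0 <= s <= 1 -> 0 <= t <= 1 -> a u v s = a u v t -> s = t) /\
       (forall w t, 0 < t < 1 -> a u v t <> p w)) /\
    (forall u v u' v' s t, adj u v -> adj u' v' ->
       ~ ((u = u' /\ v = v') \/ (u = v' /\ v = u')) ->
       0 <= s <= 1 -> 0 <= t <= 1 -> a u v s = a u' v' t ->
       exists w, a u v s = p w).

(* G is the union of k planar (spanning) subgraphs: colour each edge with a
   colour < k so that every colour class is planar. *)
Definition thick_le (V : Type) (adj : V -> V -> Prop) (k : nat) : Prop :=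
  exists c : V -> V -> nat,
    (forall u v, adj u v -> (c u v < k)%nat /\ c u v = c v u) /\
    (forall i, (i < k)%nat -> planar V (fun u v => adj u v /\ c u v = i)).

Definition thickness (V : Type) (adj : V -> V -> Prop) (t : nat) : Prop :=
  thick_le V adj t /\ (forall k, thick_le V adj k -> (t <= k)%nat).

Definition KV (m n : nat) : Type := ({i : nat | (i < m)%nat} + {j : nat | (j < n)%nat})%type.
Definition Kmn_adj (m n : nat) (x y : KV m n) : Prop :=
  match x, y with
  | inl _, inr _ => True
  | inr _, inl _ => True
  | _, _ => False
  end.

Definition K2_adj (a b : bool) : Prop := a <> b.

Definition kron_adj {V W : Type} (adjG : V -> V -> Prop) (adjH : W -> W -> Prop)
  (x y : V * W) : Prop := adjG (fst x) (fst y) /\ adjH (snd x) (snd y).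

(* Main.v *)
Require Import Defs.
From Stdlib Require Import Reals Lra.

Lemma c1 (g : R -> R) : continuity g -> continuity (fun t => exp (g t)).
Proof. intro H. apply (continuity_comp g exp); [exact H | apply derivable_continuous, derivable_exp]. Qed.
Lemma c2 (g : R -> R) : continuity g -> continuity (fun t => - exp (g t)).
Proof. intro H. intro t. apply (continuity_pt_opp (fun t => exp (g t))). apply c1; auto. Qed.

Definition hh (b : bool) (q : R * R) : R * R :=
  (if b then exp (fst q) else - exp (fst q), snd q).

Lemma hh_inj b b' q q' : hh b q = hh b' q' -> b = b' /\ q = q'.
Proof.
  destruct q as [x y], q' as [x' y']; unfold hh; simpl; intro H.
  injection H as H1 H2.
  destruct b, b'.
  - apply exp_inv in H1; subst; auto.
  - pose proof (exp_pos x); pose proof (exp_pos x'); lra.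
  - pose proof (exp_pos x); pose proof (exp_pos x'); lra.
  - assert (exp x = exp x') by lra. apply exp_inv in H; subst; auto.
Qed.

Definition side {m n} (x : KV m n) : bool := match x with inl _ => false | inr _ => true end.

Lemma adj_side {m n} (x y : KV m n) : Kmn_adj m n x y -> side y = negb (side x).
Proof. destruct x, y; simpl; tauto. Qed.

Lemma k2 (b b2 : bool) : K2_adj b b2 -> b2 = negb b.
Proof. unfold K2_adj; destruct b, b2; simpl; congruence. Qed.

Lemma planar_up m n (c : KV m n -> KV m n -> nat) i :
  planar (KV m n) (fun u v => Kmn_adj m n u v /\ c u v = i) ->
  planar (KV m n * bool) (fun u v => kron_adj (Kmn_adj m n) K2_adj u v /\ c (fst u) (fst v) = i).
Proof.
  intros [p [a [Hp [He Hc]]]].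
  exists (fun u => hh (xorb (snd u) (side (fst u))) (p (fst u))).
  exists (fun u v t => hh (xorb (snd u) (side (fst u))) (a (fst u) (fst v) t)).
  split; [|split].
  - intros [x b] [y b2]; simpl; intro H. apply hh_inj in H as [H1 H2].
    apply Hp in H2; subst y. f_equal. destruct b, b2, (side x); simpl in *; congruence.
  - intros [x b] [y b2] [[Ha Hk] Hi]; simpl in *.
    destruct (He x y (conj Ha Hi)) as [C1 [C2 [E0 [E1 [Inj Av]]]]].
    pose proof (adj_side _ _ Ha) as Sy. pose proof (k2 _ _ Hk) as Bb.
    split; [|split; [|split; [|split; [|split]]]].
    + unfold hh; simpl. destruct (xorb b (side x)); [apply c1 | apply c2]; auto.
    + unfold hh; simpl. exact C2.
    + rewrite E0; reflexivity.
    + rewrite E1, Sy, Bb. destruct b, (side x); reflexivity.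
    + intros s t Hs Ht H. apply hh_inj in H as [_ H]. auto.
    + intros [w bw] t Ht H; simpl in H. apply hh_inj in H as [_ H]. eapply Av; eauto.
  - intros [x b] [y b2] [x' b'] [y' b2'] s t [[Ha Hk] Hi] [[Ha' Hk'] Hi'] Hne Hs Ht H.
    simpl in *.
    apply hh_inj in H as [Hb H].
    pose proof (adj_side _ _ Ha) as Sy. pose proof (k2 _ _ Hk) as Bb.
    pose proof (adj_side _ _ Ha') as Sy'. pose proof (k2 _ _ Hk') as Bb'.
    subst b2 b2'.
    destruct (Hc x y x' y' s t (conj Ha Hi) (conj Ha' Hi')) as [w Hw]; auto.
    + intros [[E1 E2] | [E1 E2]]; subst x' y'; apply Hne.
      * left. assert (b = b') by (destruct b, b', (side x); simpl in *; congruence).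
        subst; auto.
      * right. rewrite Sy in Hb.
        assert (b' = negb b) by (destruct b, b', (side x); simpl in *; congruence).
        subst b'. rewrite Bool.negb_involutive. auto.
    + exists (w, xorb (xorb b (side x)) (side w)). simpl. rewrite Hw.
      f_equal. destruct b, (side x), (side w); reflexivity.
Qed.

Definition psi {m n} (x : KV m n) : KV m n * bool := (x, side x).

Lemma planar_down m n (c : KV m n * bool -> KV m n * bool -> nat) i :
  planar (KV m n * bool) (fun u v => kron_adj (Kmn_adj m n) K2_adj u v /\ c u v = i) ->
  planar (KV m n) (fun x y => Kmn_adj m n x y /\ c (psi x) (psi y) = i).
Proof.
  intros [p [a [Hp [He Hc]]]].
  assert (Hadj : forall x y, Kmn_adj m n x y -> kron_adj (Kmn_adj m n) K2_adj (psi x) (psi y)).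
  { intros x y H. split; [exact H|]. simpl. rewrite (adj_side _ _ H).
    unfold K2_adj; destruct (side x); discriminate. }
  exists (fun x => p (psi x)). exists (fun x y => a (psi x) (psi y)).
  split; [|split].
  - intros u v H. apply Hp in H. unfold psi in H. congruence.
  - intros x y [Ha Hi]. destruct (He (psi x) (psi y) (conj (Hadj _ _ Ha) Hi))
      as [C1 [C2 [E0 [E1 [Inj Av]]]]].
    repeat split; auto; intros w t Ht H; eapply Av; eauto.
  - intros x y x' y' s t [Ha Hi] [Ha' Hi'] Hne Hs Ht H.
    destruct (He (psi x) (psi y) (conj (Hadj _ _ Ha) Hi)) as [C1 [C2 [E0 [E1 [Inj Av]]]]].
    destruct (Hc (psi x) (psi y) (psi x') (psi y') s t (conj (Hadj _ _ Ha) Hi)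
                 (conj (Hadj _ _ Ha') Hi')) as [w Hw]; auto.
    + unfold psi; intros [[E3 E4] | [E3 E4]]; apply Hne; [left|right];
        split; congruence.
    + destruct (Req_dec s 0) as [->|H0].
      * exists x; auto.
      * destruct (Req_dec s 1) as [->|H1].
        -- exists y; auto.
        -- exfalso. apply (Av w s); auto. lra.
Qed.

Lemma thick_equiv m n k :
  thick_le (KV m n * bool) (kron_adj (Kmn_adj m n) K2_adj) k <->
  thick_le (KV m n) (Kmn_adj m n) k.
Proof.
  split.
  - intros [c [Hc Hp]].
    exists (fun x y => c (psi x) (psi y)). split.
    + intros x y H.
      assert (kron_adj (Kmn_adj m n) K2_adj (psi x) (psi y)).
      { split; [exact H|]. simpl. rewrite (adj_side _ _ H).
        unfold K2_adj; destruct (side x); discriminate. }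
      apply Hc; auto.
    + intros i Hi. apply planar_down. auto.
  - intros [c [Hc Hp]].
    exists (fun u v => c (fst u) (fst v)). split.
    + intros u v [H _]. apply Hc; auto.
    + intros i Hi. apply planar_up. auto.
Qed.

Theorem corollary3p7 (m n : nat) : (0 < m)%nat -> (0 < n)%nat ->
  forall t : nat,
    thickness (KV m n * bool) (kron_adj (Kmn_adj m n) K2_adj) t <->
    thickness (KV m n) (Kmn_adj m n) t.
Proof.
  intros _ _ t. unfold thickness. split; intros [H1 H2]; split.
  - apply thick_equiv; auto.
  - intros k Hk. apply H2, thick_equiv; auto.
  - apply thick_equiv; auto.
  - intros k Hk. apply H2, thick_equiv; auto.
Qed.
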